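(* Let $\lambda$ be a partition and $c=(x,y)\in\overline{\lambda}$ with $x>\lambda_1$ and $y>\lambda'_1$. Then for every $\nu\in\mathcal{U}(\lambda)$, \[ P^{q,t}_\lambda(\nu\mid c)=t^{n(\nu/\lambda)}\alpha_{\nu/\lambda}(q,t). \] In particular $P^{q,t}_\lambda(\nu\mid c)$ does not depend on the choice of such $c$.
   Context: Partitions are Young diagrams in French convention: cells $(x,y)\in\mathbb{Z}_{>0}^2$ with $x\le\lambda_y$; $\lambda'$ is the conjugate ($\lambda_j=0$ for $j>\lambda'_1$, $\lambda'_i=0$ for $i>\lambda_1$). For $c=(x,y)\in\lambda$: $a_\lambda(c)=\lambda_y-x$, $\ell_\lambda(c)=\lambda'_x-y$; $n(\kappa)=\sum_{c\in\kappa}\ell_\kappa(c)$, $n(\nu/\lambda)=n(\nu)-n(\lambda)$. $\mathcal{U}(\lambda)$ is the set of partitions obtained by adding one cell to $\lambda$. For $\lambda\subseteq\nu$, $\mathcal{R}_{\nu/\lambda}$ (resp. $\mathcal{C}_{\nu/\lambda}$) is the set of cells of $\lambda$ in a row (resp. column) containing a cell of $\nu/\lambda$. With $[i,j]=1-q^it^j$: $\alpha_{\nu/\lambda}(q,t)=\prod_{c\in\mathcal{R}_{\nu/\lambda}}\frac{[a_\lambda(c),\ell_\lambda(c)+1]}{[a_\nu(c),\ell_\nu(c)+1]}\prod_{c\in\mathcal{C}_{\nu/\lambda}}\frac{[a_\lambda(c)+1,\ell_\lambda(c)]}{[a_\nu(c)+1,\ell_\nu(c)]}$. Exterior hook walk: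 $\overline{\lambda}=\mathbb{Z}_{>0}^2\setminus\lambda$. For $c=(x,y)\in\overline{\lambda}$: ${\rm arm}_\lambda(c)=\{(i,y):\lambda_y<i<x\}$, ${\rm leg}_\lambda(c)=\{(x,j):\lambda'_x<j<y\}$, $a(c)=|{\rm arm}_\lambda(c)|$, $\ell(c)=|{\rm leg}_\lambda(c)|$; $c$ is an outer corner of $\lambda$ iff $a(c)=\ell(c)=0$. For $c'\in{\rm arm}_\lambda(c)\cup{\rm leg}_\lambda(c)$ set $P(c\rightarrow c')=q^{a(c)-i}\frac{t^{\ell(c)}(1-q)}{1-q^{a(c)}t^{\ell(c)}}$ if $c'=(x-i,y)\in{\rm arm}_\lambda(c)$, and $P(c\rightarrow c')=t^{j-1}\frac{1-t}{1-q^{a(c)}t^{\ell(c)}}$ if $c'=(x,y-j)\in{\rm leg}_\lambda(c)$. The exterior $(q,t)$-hook walk from $c$ terminates if $c$ is an outer corner, and otherwise moves to $c'$ with probability $P(c\rightarrow c')$ and repeats. $P^{q,t}_\lambda(\nu\mid c)$ is the probability (a rational function of $q,t$: sum over walks of products of step probabilities) that the walk from $c$ terminates at the cell $\nu/\lambda$. *)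

(* Defs.v *)
From mathcomp Require Import all_boot all_order all_algebra.
Set Implicit Arguments. Unset Strict Implicit. Unset Printing Implicit Defensive.
Import Order.TTheory GRing.Theory Num.Theory.
Local Open Scope ring_scope.

(* Partitions are nonincreasing lists of positive parts: la = [:: la_1; la_2; ...].
   Cells are pairs (x, y) of positive integers (French convention: x = column,
   y = row). *)
Definition is_partition (la : seq nat) : bool :=
  sorted (fun a b => (b <= a)%N) la && all (fun r => (0 < r)%N) la.

Definition prow (la : seq nat) (y : nat) : nat := nth 0%N la y.-1.
Definition pcol (la : seq nat) (x : nat) : nat := count (fun r => (x <= r)%N) la.

Definition incell (la : seq nat) (c : nat * nat) : bool :=
  [&& (0 < c.1)%N, (0 < c.2)%N & (c.1 <= prow la c.2)%N].

Definition cells (la : seq nat) : seq (nat * nat) :=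
  [seq (x, y) | y <- iota 1 (size la), x <- iota 1 (prow la y)].

Definition parm (ka : seq nat) (c : nat * nat) : nat := (prow ka c.2 - c.1)%N.
Definition pleg (ka : seq nat) (c : nat * nat) : nat := (pcol ka c.1 - c.2)%N.

Definition nstat (ka : seq nat) : nat := (\sum_(c <- cells ka) pleg ka c)%N.

Definition adds_cell (la nu : seq nat) (d : nat * nat) : Prop :=
  [/\ (0 < d.1)%N, (0 < d.2)%N, ~~ incell la d &
      forall c : nat * nat, (0 < c.1)%N -> (0 < c.2)%N ->
        incell nu c = incell la c || (c == d)].

Definition skew_cells (la nu : seq nat) : seq (nat * nat) :=
  [seq e <- cells nu | ~~ incell la e].
Definition Rcells (la nu : seq nat) : seq (nat * nat) :=
  [seq c <- cells la | has (fun e => e.2 == c.2) (skew_cells la nu)].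
Definition Ccells (la nu : seq nat) : seq (nat * nat) :=
  [seq c <- cells la | has (fun e => e.1 == c.1) (skew_cells la nu)].

Section QT.
Variables (K : fieldType) (q t : K).

Definition br (i j : nat) : K := 1 - q ^+ i * t ^+ j.

Definition alpha (la nu : seq nat) : K :=
  (\prod_(c <- Rcells la nu)
      (br (parm la c) (pleg la c).+1 / br (parm nu c) (pleg nu c).+1)) *
  (\prod_(c <- Ccells la nu)
      (br (parm la c).+1 (pleg la c) / br (parm nu c).+1 (pleg nu c))).

(* For c = (x,y) outside la:
   a(c) = x - la_y - 1, l(c) = y - la'_x - 1.
   walkP n la d x y = probability that the walk started at (x,y) terminates
   at the cell d, computed by first-step decomposition (= sum over walks of
   products of step probabilities); n is fuel, sufficient when n >= x + y
   since every step strictly decreases x + y. *)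
Fixpoint walkP (n : nat) (la : seq nat) (d : nat * nat) (x y : nat) : K :=
  match n with
  | 0%N => 0
  | n'.+1 =>
    let a := (x - prow la y - 1)%N in
    let l := (y - pcol la x - 1)%N in
    if (a == 0%N) && (l == 0%N) then (if (x, y) == d then 1 else 0)
    else
      \sum_(1 <= i < a.+1)
         (q ^+ (a - i) * t ^+ l * (1 - q) / (1 - q ^+ a * t ^+ l))
           * walkP n' la d (x - i)%N y
    + \sum_(1 <= j < l.+1)
         (t ^+ (j - 1) * (1 - t) / (1 - q ^+ a * t ^+ l))
           * walkP n' la d x (y - j)%N
  end.

(* P^{q,t}_la(nu | c), where d is the cell nu/la *)
Definition hookP (la : seq nat) (d c : nat * nat) : K :=
  walkP (c.1 + c.2) la d c.1 c.2.

End QT.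

(* Main.v *)
Require Import Defs.
From mathcomp Require Import all_boot all_order all_algebra.
From mathcomp Require Import zify ring.
Set Implicit Arguments. Unset Strict Implicit. Unset Printing Implicit Defensive.
Import Order.TTheory GRing.Theory Num.Theory.

Lemma dual la x y : is_partition la -> (0 < x)%N -> (0 < y)%N ->
  (y <= pcol la x)%N = (x <= prow la y)%N.
Proof.
move=> /andP[hs _] x0 y0; elim: la hs y y0 => [|r s IH] hs y y0.
  by rewrite /pcol /prow /= nth_nil leqNgt y0 leqNgt x0.
have hs' : sorted (fun a b => (b <= a)%N) s by apply: path_sorted hs.
have hall : all (fun b => (b <= r)%N) s.
  by apply: (order_path_min _ hs) => a b c h1 h2; apply: leq_trans h2 h1.
have c0 : (r < x)%N -> count (fun b => (x <= b)%N) s = 0%N.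
  move=> hr; rewrite (eq_in_count (a2 := pred0)) ?count_pred0 // => b /(allP hall) hb.
  by apply/negbTE; rewrite -ltnNge (leq_ltn_trans hb hr).
rewrite /pcol /prow /=; case: y y0 => [|[|y']] //= _.
  by case: (leqP x r) => hr //; rewrite c0.
have := IH hs' y'.+1 isT; rewrite /pcol /prow /= => <-.
case: (leqP x r) => hr; first by rewrite add1n ltnS.
by rewrite c0.
Qed.

Lemma prow_mono la y y' : is_partition la -> (0 < y)%N -> (y <= y')%N ->
  (prow la y' <= prow la y)%N.
Proof.
move=> hp y0 yy; case E: (prow la y') => [|x] //.
have h : (x.+1 <= prow la y')%N by rewrite E.
rewrite -dual // in h; last by apply: leq_trans yy.
by rewrite -dual //; apply: leq_trans h.
Qed.

Lemma pcol_mono la x x' : (x <= x')%N -> (pcol la x' <= pcol la x)%N.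
Proof. by move=> h; apply: sub_count => b /=; apply: leq_trans. Qed.

Lemma pcol_size la x : (pcol la x <= size la)%N.
Proof. exact: count_size. Qed.

Lemma prow_big la y : (size la < y)%N -> prow la y = 0%N.
Proof. by move=> h; rewrite /prow nth_default //; case: y h => //= y; rewrite ltnS. Qed.

Lemma eq_le_nat a b : (forall x, (0 < x)%N -> (x <= a)%N = (x <= b)%N) -> a = b.
Proof.
move=> h; apply/eqP; rewrite eqn_leq; apply/andP; split.
  by case: a h => // a h; rewrite -h.
by case: b h => // b h; rewrite h.
Qed.

Lemma mem_cells ka c : (c \in cells ka) = incell ka c.
Proof.
rewrite /cells /incell; apply/allpairsPdep/idP.
  move=> [y [x [hy hx ->]]] /=; move: hy hx; rewrite !mem_iota.
  by case/andP=> -> _ /andP[-> ]; rewrite add1n ltnS.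
case: c => x y /= /and3P[x0 y0 hx]; exists y, x; rewrite !mem_iota !add1n !ltnS x0 y0 hx.
split=> //=; case: (leqP y (size ka)) => // hy.
by rewrite prow_big // in hx; case: (x) x0 hx.
Qed.

Lemma uniq_cells ka : uniq (cells ka).
Proof.
rewrite /cells; apply: allpairs_uniq_dep; first exact: iota_uniq.
  by move=> y _; exact: iota_uniq.
by move=> [y1 x1] [y2 x2] _ _ /= [-> ->].
Qed.

Lemma incellE ka x y : (0 < x)%N -> (0 < y)%N -> incell ka (x, y) = (x <= prow ka y)%N.
Proof. by move=> x0 y0; rewrite /incell /= x0 y0. Qed.

Section Shape.
Variables (la nu : seq nat) (al be : nat).
Hypotheses (hla : is_partition la) (hnu : is_partition nu)
  (hd : adds_cell la nu (al, be)).

Lemma al0 : (0 < al)%N. Proof. by case: hd. Qed.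
Lemma be0 : (0 < be)%N. Proof. by case: hd. Qed.

Lemma inc_eq x y : (0 < x)%N -> (0 < y)%N ->
  incell nu (x, y) = incell la (x, y) || ((x, y) == (al, be)).
Proof. by case: hd => _ _ _ h x0 y0; apply: (h (x, y)). Qed.

Lemma d_notin : ~~ incell la (al, be). Proof. by case: hd. Qed.
Lemma d_in : incell nu (al, be).
Proof. by rewrite inc_eq ?al0 ?be0 // eqxx orbT. Qed.

Lemma rowbe : prow la be = al.-1.
Proof.
have hn := d_notin; rewrite incellE ?al0 ?be0 // -ltnNge in hn.
have hi := d_in; rewrite incellE ?al0 ?be0 // in hi.
apply: eq_le_nat => x x0; apply/idP/idP => h.
  by rewrite -ltnS prednK ?al0 //; apply: leq_ltn_trans hn.
have : incell nu (x, be).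
  by rewrite incellE ?be0 //; apply: leq_trans hi; apply: leq_trans h (leq_pred _).
rewrite inc_eq ?be0 // incellE ?be0 // xpair_eqE eqxx andbT.
case/orP => // /eqP ex; move: h; rewrite ex; case: (al) al0 => // a _ /=.
by rewrite ltnn.
Qed.

Lemma nurow y : (0 < y)%N -> prow nu y = if y == be then al else prow la y.
Proof.
move=> y0; apply: eq_le_nat => x x0.
rewrite -incellE // inc_eq // incellE // xpair_eqE.
case: (y =P be) => [->|_]; last by rewrite andbF orbF.
rewrite rowbe andbT; have := al0; case: (al) => // a _ /=.
by rewrite (leq_eqVlt x a.+1) ltnS orbC.
Qed.

Lemma colal : pcol la al = be.-1.
Proof.
have hn := d_notin; rewrite incellE ?al0 ?be0 // rowbe -ltnNge in hn.
have hi := d_in; rewrite incellE ?al0 ?be0 // -dual ?al0 ?be0 // in hi.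
apply: eq_le_nat => y y0; rewrite dual ?al0 //; apply/idP/idP => h.
  rewrite -ltnS prednK ?be0 // ltnNge; apply/negP => hb.
  rewrite -dual ?al0 // in h; have := leq_trans hb h; rewrite dual ?al0 ?be0 //.
  by rewrite rowbe leqNgt hn.
have : incell nu (al, y).
  rewrite incellE ?al0 // -dual ?al0 //; apply: leq_trans hi.
  by apply: leq_trans h (leq_pred _).
rewrite inc_eq ?al0 // incellE ?al0 // xpair_eqE eqxx /=.
case/orP => // /eqP ey; move: h; rewrite ey; case: (be) be0 => // b _ /=.
by rewrite ltnn.
Qed.

Lemma nucol x : (0 < x)%N -> pcol nu x = if x == al then be else pcol la x.
Proof.
move=> x0; apply: eq_le_nat => y y0.
rewrite dual // -incellE // inc_eq // incellE // -dual // xpair_eqE.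
case: (x =P al) => [->|_]; last by rewrite orbF.
rewrite colal /=; have := be0; case: (be) => // b _ /=.
by rewrite (leq_eqVlt y b.+1) ltnS orbC.
Qed.

End Shape.

Section BigGen.
Variables (R : Type) (idx : R) (op : Monoid.law idx).

Lemma big_pred1_uniq (r : seq nat) a G : uniq r ->
  \big[op/idx]_(x <- r | x == a) G x = if a \in r then G a else idx.
Proof.
move=> ur; case: ifP => ha.
  by rewrite -big_filter (filter_pred1_uniq ur ha) big_seq1.
by rewrite big1_seq // => x /andP[/eqP -> ]; rewrite ha.
Qed.

Lemma big_iota_lt n b G : (b.-1 <= n)%N -> (0 < b)%N ->
  \big[op/idx]_(y <- iota 1 n | (y < b)%N) G y = \big[op/idx]_(1 <= y < b) G y.
Proof.
move=> h b0; rewrite /index_iota subn1 -(subnKC h) iotaD big_cat /=.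
rewrite [X in op _ X]big1_seq ?Monoid.mulm1; last first.
  move=> y /andP[hy]; rewrite mem_iota => /andP[hy2 _].
  exfalso; move: hy hy2; rewrite add1n prednK //; lia.
rewrite big_seq_cond [RHS]big_seq; apply: eq_bigl => y.
rewrite mem_iota; case: (1 <= y < 1 + b.-1)%N /andP => //= -[_ ].
by rewrite add1n prednK // => ->.
Qed.
End BigGen.

Section Shape2.
Variables (la nu : seq nat) (al be : nat).
Hypotheses (hla : is_partition la) (hnu : is_partition nu)
  (hd : adds_cell la nu (al, be)).

Lemma mem_skew c : (c \in skew_cells la nu) = (c == (al, be)).
Proof.
rewrite /skew_cells mem_filter mem_cells; case: c => x y.
case: (posnP x) => [->|x0]; first by rewrite /incell /= ?andbF; case: eqP => // -[e _]; move: (al0 hd); rewrite -e.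
case: (posnP y) => [->|y0]; first by rewrite /incell /= ?andbF; case: eqP => // -[_ e]; move: (be0 hd); rewrite -e.
rewrite (inc_eq hd) //; case: eqP => [[-> ->]|_]; last by rewrite orbF andNb.
by rewrite (negbTE (d_notin hd)).
Qed.

Lemma has_skew P : has P (skew_cells la nu) = P (al, be).
Proof.
rewrite (eq_has_r (s2 := [:: (al, be)])) /= ?orbF // => c.
by rewrite mem_skew inE.
Qed.

Lemma RcellsE : Rcells la nu = [seq c <- cells la | c.2 == be].
Proof. by apply: eq_filter => c; rewrite has_skew /= eq_sym. Qed.

Lemma CcellsE : Ccells la nu = [seq c <- cells la | c.1 == al].
Proof. by apply: eq_filter => c; rewrite has_skew /= eq_sym. Qed.

Lemma big_Ccells (R : Type) (idx : R) (op : Monoid.law idx) F :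
  \big[op/idx]_(c <- cells la | c.1 == al) F c = \big[op/idx]_(1 <= j < be) F (al, j).
Proof.
rewrite big_mkcond /cells big_allpairs_dep /=.
rewrite (eq_big_seq (fun y => if (y < be)%N then F (al, y) else idx)); last first.
  move=> y; rewrite mem_iota => /andP[y0 _].
  rewrite -big_mkcond big_pred1_uniq ?iota_uniq // mem_iota add1n ltnS (al0 hd) /=.
  rewrite -dual ?(al0 hd) // (colal hla hnu hd).
  by case: (be) (be0 hd) => // b _; rewrite ltnS.
rewrite -big_mkcond big_iota_lt ?(be0 hd) //.
by rewrite -(colal hla hnu hd); apply: pcol_size.
Qed.

Lemma big_Rcells (R : Type) (idx : R) (op : Monoid.law idx) F :
  \big[op/idx]_(c <- cells la | c.2 == be) F c = \big[op/idx]_(1 <= i < al) F (i, be).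
Proof.
rewrite big_mkcond /cells big_allpairs_dep /=.
rewrite (eq_bigr (fun y => if y == be then \big[op/idx]_(x <- iota 1 (prow la y)) F (x, y) else idx)); last first.
  by move=> y _; case: eqP => // _; rewrite big1.
rewrite -big_mkcond big_pred1_uniq ?iota_uniq // (rowbe hd) /index_iota subn1.
case: ifP => // hb; rewrite mem_iota in hb.
have : prow la be = 0%N by apply: prow_big; move: hb; rewrite add1n ltnS (be0 hd) /=; lia.
by rewrite (rowbe hd) => ->; rewrite big_nil.
Qed.

Lemma nstat_diff : (nstat nu - nstat la)%N = be.-1.
Proof.
have hperm : perm_eq (cells nu) ((al, be) :: cells la).
  apply: uniq_perm; first exact: uniq_cells.
    by rewrite /= uniq_cells mem_cells (d_notin hd).
  move=> [x y]; rewrite inE !mem_cells.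
  case: (posnP x) => [->|x0]; first by rewrite /incell /= ?andbF; case: eqP => // -[e _]; move: (al0 hd); rewrite -e.
  case: (posnP y) => [->|y0]; first by rewrite /incell /= ?andbF; case: eqP => // -[_ e]; move: (be0 hd); rewrite -e.
  by rewrite (inc_eq hd) // orbC.
rewrite /nstat (perm_big _ hperm) big_cons.
rewrite (eq_big_seq (fun c => pleg la c + (c.1 == al))%N); last first.
  move=> [x y]; rewrite mem_cells => /and3P[/= x0 y0 hx].
  rewrite /pleg /= (nucol hla hnu hd) //; case: (x =P al) => [ex|_]; last by rewrite addn0.
  rewrite ex (colal hla hnu hd) addn1; subst x.
  rewrite -dual // (colal hla hnu hd) in hx; have := be0 hd; lia.
rewrite big_split /=.
have -> : (\sum_(i <- cells la) (i.1 == al))%N = (\sum_(c <- cells la | c.1 == al) 1)%N.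
  by rewrite [RHS]big_mkcond; apply: eq_bigr => c _; case: (_ == _).
rewrite big_Ccells sum_nat_const_nat /pleg /= (nucol hla hnu hd) ?(al0 hd) // eqxx subnn.
lia.
Qed.

End Shape2.

Local Open Scope ring_scope.

Section Walk.
Variables (K : fieldType) (q t : K).
Hypothesis generic : forall i j : nat, (0 < i + j)%N -> 1 - q ^+ i * t ^+ j != 0.
Variables (la nu : seq nat) (al be : nat).
Hypotheses (hla : is_partition la) (hnu : is_partition nu)
  (hd : adds_cell la nu (al, be)).

Lemma brnz i j : (0 < i + j)%N -> br q t i j != 0.
Proof. exact: generic. Qed.

Lemma tele (G : nat -> K) m n : (m <= n)%N -> (forall k, G k != 0) ->
  (\prod_(m <= k < n) (G k.+1 / G k)) * G m = G n.
Proof.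
move=> hmn nz; elim: n hmn => [|n IH] hmn.
  by move: hmn; rewrite leqn0 => /eqP ->; rewrite big_geq // mul1r.
case: (ltnP m n.+1) => h; last first.
  have -> : m = n.+1 by apply/eqP; rewrite eqn_leq h hmn.
  by rewrite big_geq // mul1r.
by rewrite big_nat_recr //= mulrAC IH ?ltnS // mulrC divfK ?nz.
Qed.

Lemma RL (F : nat -> K) a b u w : (a <= u.+1)%N -> (u <= w)%N -> (w < b)%N ->
  \prod_(a <= i < b | (u < i <= w)%N) F i = \prod_(u.+1 <= i < w.+1) F i.
Proof.
move=> h1 h2 h3.
rewrite (@big_cat_nat _ _ _ u.+1) //=; last by apply: leq_trans h3.
rewrite [X in X * _]big_nat_cond big1 ?mul1r; last first.
  by move=> i /andP[/andP[_ hi] /andP[hi2 _]]; exfalso; move: hi hi2; lia.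
rewrite (@big_cat_nat _ _ _ w.+1) //=.
rewrite [X in _ * X]big_nat_cond [X in _ * X]big1 ?mulr1; last first.
  by move=> i /andP[/andP[hi _] /andP[_ hi2]]; exfalso; move: hi hi2; lia.
rewrite big_nat_cond [RHS]big_nat_cond; apply: eq_bigl => i.
case h: (u.+1 <= i < w.+1)%N => //=; move/andP: h => [hi hi2].

Qed.

Definition Bx x := (be.-1 - pcol la x)%N.
Definition Ay y := (al.-1 - prow la y)%N.
Definition HU j := br q t (prow la j - al).+1 (be.-1 - j) / br q t (prow la j - al).+1 (be - j).
Definition HV i := br q t (al.-1 - i) (pcol la i - be).+1 / br q t (al - i) (pcol la i - be).+1.
Definition PU x := \prod_(1 <= j < be | (prow la j < x)%N) HU j.
Definition UU x := t ^+ Bx x * PU x.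
Definition VV y := \prod_(1 <= i < al | (pcol la i < y)%N) HV i.

Lemma split_lt (F : nat -> K) (f : nat -> nat) a b x :
  \prod_(a <= j < b | (f j < x.+1)%N) F j =
  (\prod_(a <= j < b | (f j < x)%N) F j) * \prod_(a <= j < b | f j == x) F j.
Proof.
rewrite big_mkcond [X in X * _]big_mkcond [X in _ * X]big_mkcond -big_split.
apply: eq_bigr => j _; rewrite ltnS.
by case: (ltngtP (f j) x) => _ /=; rewrite ?mulr1 ?mul1r.
Qed.

Lemma PU_step x : (al <= x)%N ->
  PU x.+1 * br q t (x.+1 - al) (Bx x.+1) = PU x * br q t (x.+1 - al) (Bx x).
Proof.
move=> hx; have x0 : (0 < x)%N by apply: leq_trans hx; apply: al0 hd.
rewrite /PU split_lt -mulrA; congr (_ * _).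
have hc : (pcol la x <= be.-1)%N by rewrite -(colal hla hnu hd); apply: pcol_mono.
have b0 := be0 hd.
rewrite big_nat_cond (eq_bigl (fun j => (1 <= j < be) && (pcol la x.+1 < j <= pcol la x))%N); last first.
  move=> j; case hj: (1 <= j < be)%N => //=; move/andP: hj => [j0 _].
  rewrite ltnNge !dual //.
  by case: (ltngtP (prow la j) x) => //= h; rewrite ?ltnW ?h // ltnNge ltnW.
rewrite -big_nat_cond RL //; last first.
- by move: hc b0; lia.
- by apply: pcol_mono.
rewrite (eq_big_nat _ _ (F2 := fun j => (fun k => br q t (x - al).+1 (be - k)) j.+1 / (fun k => br q t (x - al).+1 (be - k)) j)); last first.
  move=> j /andP[h1 h2]; rewrite /HU.
  have -> : prow la j = x.
    have j0 : (0 < j)%N by apply: leq_trans h1.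
    have a1 : (x <= prow la j)%N by rewrite -dual //; rewrite ltnS in h2.
    have a2 : ~~ (x.+1 <= prow la j)%N by rewrite -dual // -ltnNge.
    by apply/eqP; move: a1 a2; lia.
  by have -> : (be.-1 - j = be - j.+1)%N by move: b0; lia.
rewrite /Bx; have -> : (be.-1 - pcol la x.+1 = be - (pcol la x.+1).+1)%N by move: b0; lia.
have -> : (be.-1 - pcol la x = be - (pcol la x).+1)%N by move: b0; lia.
have -> : (x.+1 - al = (x - al).+1)%N by move: hx; lia.
rewrite tele //; first by rewrite ltnS pcol_mono.
by move=> k; apply: brnz.
Qed.

Lemma VV_step y : (be <= y)%N ->
  VV y.+1 * br q t (Ay y.+1) (y.+1 - be) = VV y * br q t (Ay y) (y.+1 - be).
Proof.
move=> hy; have y0 : (0 < y)%N by apply: leq_trans hy; apply: be0 hd.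
rewrite /VV split_lt -mulrA; congr (_ * _).
have hc : (prow la y <= al.-1)%N by rewrite -(rowbe hd); apply: prow_mono => //; apply: be0 hd.
have a0 := al0 hd.
rewrite big_nat_cond (eq_bigl (fun i => (1 <= i < al) && (prow la y.+1 < i <= prow la y))%N); last first.
  move=> i; case hi: (1 <= i < al)%N => //=; move/andP: hi => [i0 _].
  rewrite ltnNge -!dual //.
  by case: (ltngtP (pcol la i) y) => //= h; rewrite ?ltnW ?h // ltnNge ltnW.
rewrite -big_nat_cond RL //; last first.
- by move: hc a0; lia.
- by apply: prow_mono.
rewrite (eq_big_nat _ _ (F2 := fun j => (fun k => br q t (al - k) (y - be).+1) j.+1 / (fun k => br q t (al - k) (y - be).+1) j)); last first.
  move=> j /andP[h1 h2]; rewrite /HV.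
  have -> : pcol la j = y.
    have j0 : (0 < j)%N by apply: leq_trans h1.
    have a1 : (y <= pcol la j)%N by rewrite dual //; rewrite ltnS in h2.
    have a2 : ~~ (y.+1 <= pcol la j)%N by rewrite dual // -ltnNge.
    by apply/eqP; move: a1 a2; lia.
  by have -> : (al.-1 - j = al - j.+1)%N by move: a0; lia.
rewrite /Ay; have -> : (al.-1 - prow la y.+1 = al - (prow la y.+1).+1)%N by move: a0; lia.
have -> : (al.-1 - prow la y = al - (prow la y).+1)%N by move: a0; lia.
have -> : (y.+1 - be = (y - be).+1)%N by move: hy; lia.
rewrite tele //; first by rewrite ltnS prow_mono.
by move=> k; apply: brnz; rewrite addnS.
Qed.

Lemma SU X : \sum_(1 <= i < X.+1) q ^+ (X - i) * (1 - q) * UU (al + X - i)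
  = br q t X (Bx (al + X)) * PU (al + X).
Proof.
elim: X => [|X IH].
  by rewrite big_geq // /Bx addn0 (colal hla hnu hd) subnn /br !expr0 mulr1 subrr mul0r.
rewrite big_nat_recl //.
rewrite (eq_bigr (fun i => q ^+ (X - i) * (1 - q) * UU (al + X - i))); last first.
  by move=> i _; rewrite subSS addnS subSS.
rewrite IH subn1 /= addnS subn1 /=.
have st := PU_step (leq_addr X al).
have e : ((al + X).+1 - al = X.+1)%N by lia.
rewrite e in st; rewrite [in RHS]mulrC st /UU /br exprS; ring.
Qed.

Lemma SV Y : \sum_(1 <= j < Y.+1) t ^+ (j - 1) * (1 - t) * VV (be + Y - j)
  = br q t (Ay (be + Y)) Y * VV (be + Y).
Proof.
elim: Y => [|Y IH].
  by rewrite big_geq // /Ay addn0 (rowbe hd) subnn /br !expr0 mulr1 subrr mul0r.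
rewrite big_nat_recl //.
rewrite (eq_big_nat _ _ (F2 := fun i => t * (t ^+ (i - 1) * (1 - t) * VV (be + Y - i)))); last first.
  move=> i /andP[i0 _]; rewrite addnS subSS.
  by case: i i0 => // i _; rewrite subSS !subn1 /= exprS !mulrA.
rewrite -big_distrr /= IH subnn expr0 mul1r addnS subn1 /=.
have st := VV_step (leq_addr Y be).
have e : ((be + Y).+1 - be = Y.+1)%N by lia.
rewrite e in st; rewrite [in RHS]mulrC st /br exprS; ring.
Qed.

Lemma walk_zero n x y : ((x < al) || (y < be))%N -> walkP q t n la (al, be) x y = 0.
Proof.
elim: n x y => [|n IH] x y h //=.
case: ifP => _.
  case: eqP => // -[ex ey]; subst x y; move: h; by rewrite !ltnn.
rewrite !big1 ?addr0 // => i _; rewrite IH ?mulr0 //.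
- case/orP: h => h; apply/orP; [left => // | right]; apply: leq_ltn_trans h; apply: leq_subr.
- case/orP: h => h; apply/orP; [left; apply: leq_ltn_trans h; apply: leq_subr | right => //].
Qed.

Lemma walk_main n x y : (al <= x)%N -> (be <= y)%N -> (x + y <= n)%N ->
  walkP q t n la (al, be) x y = UU x * VV y.
Proof.
elim: n x y => [|n IH] x y hx hy hn.
  by exfalso; have := al0 hd; move: hx hn; lia.
have hrow : (prow la y <= al.-1)%N by rewrite -(rowbe hd); apply: prow_mono => //; apply: be0 hd.
have hcol : (pcol la x <= be.-1)%N by rewrite -(colal hla hnu hd); apply: pcol_mono.
have a0 := al0 hd; have b0 := be0 hd.
have [X ex] : exists X, x = (al + X)%N by exists (x - al)%N; rewrite subnKC.
have [Y ey] : exists Y, y = (be + Y)%N by exists (y - be)%N; rewrite subnKC.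
have ea : (x - prow la y - 1 = X + Ay y)%N by rewrite /Ay; move: hrow ex a0; lia.
have el : (y - pcol la x - 1 = Y + Bx x)%N by rewrite /Bx; move: hcol ey b0; lia.
rewrite /= ea el.
case: ifP => hc.
  move/andP: hc => [/eqP h1 /eqP h2]; clear ea el hn IH hrow hcol.
  have eX : x = al by move/eqP: h1; rewrite addn_eq0 ex => /andP[/eqP -> _]; rewrite addn0.
  have eY : y = be by move/eqP: h2; rewrite addn_eq0 ey => /andP[/eqP -> _]; rewrite addn0.
  rewrite eX eY eqxx /UU /VV /PU.
  have -> : Bx al = 0%N by rewrite /Bx (colal hla hnu hd) subnn.
  rewrite expr0 mul1r big_nat_cond big1 ?mul1r; last first.
    move=> i /andP[/andP[i0 hi] hc2].
    exfalso; move: hc2; rewrite ltnNge -dual // (colal hla hnu hd).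
    by move: hi b0; lia.
  rewrite big_nat_cond big1 // => i /andP[/andP[i0 hi] hc2].
  exfalso; move: hc2; rewrite ltnNge dual // (rowbe hd).
  by move: hi a0; lia.
have hD : 1 - q ^+ (X + Ay y) * t ^+ (Y + Bx x) != 0.
  by apply: generic; move: hc; case: (X + Ay y)%N => [|?]; case: (Y + Bx x)%N.
have arm : \sum_(1 <= i < (X + Ay y).+1) (q ^+ (X + Ay y - i) * t ^+ (Y + Bx x) * (1 - q) /
       (1 - q ^+ (X + Ay y) * t ^+ (Y + Bx x))) * walkP q t n la (al, be) (x - i) y
   = (q ^+ Ay y * t ^+ (Y + Bx x) / (1 - q ^+ (X + Ay y) * t ^+ (Y + Bx x)) * VV y) *
     (br q t X (Bx x) * PU x).
  rewrite (@big_cat_nat _ _ _ X.+1) //=; last by rewrite ltnS leq_addr.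
  rewrite [Z in _ + Z]big_nat_cond [Z in _ + Z]big1 ?addr0; last first.
    move=> i /andP[/andP[hi1 hi2] _]; rewrite walk_zero ?mulr0 //.
    by apply/orP; left; move: hi1; rewrite ex; lia.
  rewrite ex -SU -ex big_distrr /=; apply: eq_big_nat => i /andP[hi1 hi2].
  rewrite IH //; first last.
  - by move: hi1 hi2 hn; rewrite ex; lia.
  - by move: hi2; rewrite ex; lia.
  have -> : (X + Ay y - i = Ay y + (X - i))%N by move: hi2; lia.
  rewrite exprD; field; exact: hD.
have leg : \sum_(1 <= j < (Y + Bx x).+1) (t ^+ (j - 1) * (1 - t) /
       (1 - q ^+ (X + Ay y) * t ^+ (Y + Bx x))) * walkP q t n la (al, be) x (y - j)
   = (UU x / (1 - q ^+ (X + Ay y) * t ^+ (Y + Bx x))) * (br q t (Ay y) Y * VV y).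
  rewrite (@big_cat_nat _ _ _ Y.+1) //=; last by rewrite ltnS leq_addr.
  rewrite [Z in _ + Z]big_nat_cond [Z in _ + Z]big1 ?addr0; last first.
    move=> i /andP[/andP[hi1 hi2] _]; rewrite walk_zero ?mulr0 //.
    by apply/orP; right; move: hi1; rewrite ey; lia.
  rewrite ey -SV -ey big_distrr /=; apply: eq_big_nat => i /andP[hi1 hi2].
  rewrite IH //; first last.
  - by move: hi1 hi2 hn; rewrite ey; lia.
  - by move: hi2; rewrite ey; lia.
  field; exact: hD.
rewrite arm leg /UU /br !exprD; field.
by rewrite -!exprD.
Qed.

Lemma UU_far cx : (prow la 1 < cx)%N ->
  UU cx = t ^+ be.-1 * \prod_(1 <= j < be) HU j.
Proof.
move=> hx; have c0 : (0 < cx)%N by apply: leq_ltn_trans hx.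
rewrite /UU /Bx.
have -> : pcol la cx = 0%N.
  apply/eqP; rewrite -leqn0 leqNgt dual //; apply/negP => h.
  by move: (leq_ltn_trans h hx); rewrite ltnn.
rewrite subn0 /PU; congr (_ * _).
rewrite big_nat_cond [RHS]big_nat_cond; apply: eq_bigl => j.
case: (1 <= j < be)%N /andP => //= -[j0 _].
by apply: leq_ltn_trans hx; apply: prow_mono.
Qed.

Lemma VV_far cy : (pcol la 1 < cy)%N -> VV cy = \prod_(1 <= i < al) HV i.
Proof.
move=> hy; rewrite /VV big_nat_cond [RHS]big_nat_cond; apply: eq_bigl => i.
case: (1 <= i < al)%N /andP => //= -[i0 _].
by apply: leq_ltn_trans hy; apply: pcol_mono.
Qed.
End Walk.

Unset Implicit Arguments.
Set Strict Implicit.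

Theorem theorem6p5 (K : fieldType) (q t : K)
  (generic : forall i j : nat, (0 < i + j)%N -> 1 - q ^+ i * t ^+ j != 0)
  (la : seq nat) (hla : is_partition la) (c : nat * nat)
  (hx : (prow la 1 < c.1)%N) (hy : (pcol la 1 < c.2)%N)
  (nu : seq nat) (d : nat * nat) (hnu : is_partition nu)
  (hd : adds_cell la nu d) :
  hookP q t la d c = t ^+ (nstat nu - nstat la) * alpha q t la nu.
Proof.
case: d hd => al be hd; case: c hx hy => cx cy /= hx hy.
have a0 := al0 hd; have b0 := be0 hd.
have hal : (al <= cx)%N.
  have : (prow la be <= prow la 1)%N by apply: prow_mono.
  by rewrite (rowbe hd) => h; move: (leq_ltn_trans h hx) a0; lia.
have hbe : (be <= cy)%N.
  have : (pcol la al <= pcol la 1)%N by apply: pcol_mono.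
  by rewrite (colal hla hnu hd) => h; move: (leq_ltn_trans h hy) b0; lia.
rewrite /hookP /= (walk_main generic hla hnu hd) // UU_far // VV_far //.
rewrite (nstat_diff hla hnu hd) /alpha (RcellsE hd) (CcellsE hd) !big_filter.
rewrite (big_Rcells hla hnu hd) (big_Ccells hla hnu hd).
have e1 : \prod_(1 <= j < be) (br q t (parm la (al, j)).+1 (pleg la (al, j)) /
     br q t (parm nu (al, j)).+1 (pleg nu (al, j))) = \prod_(1 <= j < be) HU q t la al be j.
  apply: eq_big_nat => j /andP[j0 hj].
  rewrite /HU /parm /pleg /= (colal hla hnu hd) (nurow hd) // (ltn_eqF hj).
  by rewrite (nucol hla hnu hd) // eqxx.
have e2 : \prod_(1 <= i < al) (br q t (parm la (i, be)) (pleg la (i, be)).+1 /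
     br q t (parm nu (i, be)) (pleg nu (i, be)).+1) = \prod_(1 <= i < al) HV q t la al be i.
  apply: eq_big_nat => i /andP[i0 hi].
  rewrite /HV /parm /pleg /= (rowbe hd) (nurow hd) // eqxx.
  by rewrite (nucol hla hnu hd) // (ltn_eqF hi).
rewrite e1 e2; ring.
Qed.
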